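(* Let $\mathcal{T}$ be a triangulated category, let $X$ and $Y$ be indecomposable objects of $\mathcal{T}$, and let $u:X\to Y$ be an irreducible morphism. Then the mapping cone $C_u$ (the third object of a distinguished triangle $X\xrightarrow{u}Y\to C_u\to X[1]$) is indecomposable.
   Context: A morphism is irreducible if it is neither a split monomorphism nor a split epimorphism, and whenever it factors as $hg$, either $g$ is a split monomorphism or $h$ is a split epimorphism. *)

(* Defs.v *)
From HB Require Import structures.
From mathcomp Require Import all_boot all_algebra.
Set Implicit Arguments. Unset Strict Implicit. Unset Printing Implicit Defensive.
Import GRing.Theory.
Local Open Scope ring_scope.

Record preadditive := Preadditive {
  Ob :> Type;
  Mor : Ob -> Ob -> zmodType;
  comp : forall X Y Z : Ob, Mor Y Z -> Mor X Y -> Mor X Z;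
  idm : forall X : Ob, Mor X X;
  compA : forall X Y Z W (h : Mor Z W) (g : Mor Y Z) (f : Mor X Y),
      comp h (comp g f) = comp (comp h g) f;
  comp1m : forall X Y (f : Mor X Y), comp (idm Y) f = f;
  compm1 : forall X Y (f : Mor X Y), comp f (idm X) = f;
  compDl : forall X Y Z (g1 g2 : Mor Y Z) (f : Mor X Y),
      comp (g1 + g2) f = comp g1 f + comp g2 f;
  compDr : forall X Y Z (g : Mor Y Z) (f1 f2 : Mor X Y),
      comp g (f1 + f2) = comp g f1 + comp g f2
}.
Arguments comp {p X Y Z}.
Arguments idm {p}.
Arguments Mor {p}.

Section Basic.
Variable C : preadditive.

Definition is_zero (X : C) : Prop := idm X = 0.

Definition is_iso (X Y : C) (f : Mor X Y) : Prop :=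
  exists g : Mor Y X, comp g f = idm X /\ comp f g = idm Y.
Definition isomorphic (X Y : C) : Prop := exists f : Mor X Y, is_iso f.
Definition split_mono (X Y : C) (f : Mor X Y) : Prop :=
  exists g : Mor Y X, comp g f = idm X.
Definition split_epi (X Y : C) (f : Mor X Y) : Prop :=
  exists g : Mor Y X, comp f g = idm Y.

Definition is_biproduct (A B P : C) (i1 : Mor A P) (i2 : Mor B P)
    (p1 : Mor P A) (p2 : Mor P B) : Prop :=
  [/\ comp p1 i1 = idm A, comp p2 i2 = idm B, comp p1 i2 = 0,
      comp p2 i1 = 0 & comp i1 p1 + comp i2 p2 = idm P].

Definition is_additive : Prop :=
  (exists Z : C, is_zero Z) /\
  forall A B : C, exists (P : C) (i1 : Mor A P) (i2 : Mor B P)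
    (p1 : Mor P A) (p2 : Mor P B), is_biproduct i1 i2 p1 p2.

Definition indecomposable (X : C) : Prop :=
  ~ is_zero X /\
  forall (A B : C) (i1 : Mor A X) (i2 : Mor B X) (p1 : Mor X A) (p2 : Mor X B),
    is_biproduct i1 i2 p1 p2 -> is_zero A \/ is_zero B.

Definition irreducible (X Y : C) (f : Mor X Y) : Prop :=
  ~ split_mono f /\ ~ split_epi f /\
  forall (Z : C) (g : Mor X Z) (h : Mor Z Y), comp h g = f ->
    split_mono g \/ split_epi h.

End Basic.

Record triangulated := Triangulated {
  TC :> preadditive;
  tc_additive : is_additive TC;
  sh : TC -> TC;
  shM : forall X Y : TC, Mor X Y -> Mor (sh X) (sh Y);
  shM_D : forall X Y (f g : Mor X Y), shM (f + g) = shM f + shM g;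
  shM_1 : forall X : TC, shM (idm X) = idm (sh X);
  shM_comp : forall X Y Z (g : Mor Y Z) (f : Mor X Y),
      shM (comp g f) = comp (shM g) (shM f);
  shM_ff : forall X Y : TC, bijective (@shM X Y);
  sh_es : forall Z : TC, exists X : TC, isomorphic (sh X) Z;
  dist : forall X Y Z : TC, Mor X Y -> Mor Y Z -> Mor Z (sh X) -> Prop;
  TR1_iso : forall X Y Z X' Y' Z' (u : Mor X Y) (v : Mor Y Z) (w : Mor Z (sh X))
      (u' : Mor X' Y') (v' : Mor Y' Z') (w' : Mor Z' (sh X'))
      (a : Mor X X') (b : Mor Y Y') (c : Mor Z Z'),
      is_iso a -> is_iso b -> is_iso c ->
      comp b u = comp u' a -> comp c v = comp v' b -> comp (shM a) w = comp w' c ->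
      dist u v w -> dist u' v' w';
  TR1_id : forall (X Z0 : TC), is_zero Z0 ->
      dist (idm X) (0 : Mor X Z0) (0 : Mor Z0 (sh X));
  TR1_ex : forall (X Y : TC) (u : Mor X Y),
      exists (Z : TC) (v : Mor Y Z) (w : Mor Z (sh X)), dist u v w;
  TR2 : forall X Y Z (u : Mor X Y) (v : Mor Y Z) (w : Mor Z (sh X)),
      dist u v w <-> dist v w (- shM u);
  TR3 : forall X Y Z X' Y' Z' (u : Mor X Y) (v : Mor Y Z) (w : Mor Z (sh X))
      (u' : Mor X' Y') (v' : Mor Y' Z') (w' : Mor Z' (sh X'))
      (a : Mor X X') (b : Mor Y Y'),
      dist u v w -> dist u' v' w' -> comp b u = comp u' a ->
      exists c : Mor Z Z', comp c v = comp v' b /\ comp (shM a) w = comp w' c;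
  TR4 : forall X Y Z Z' X' Y' (u : Mor X Y) (v : Mor Y Z)
      (j : Mor Y Z') (k : Mor Z' (sh X))
      (l : Mor Z X') (i : Mor X' (sh Y))
      (m : Mor Z Y') (n : Mor Y' (sh X)),
      dist u j k -> dist v l i -> dist (comp v u) m n ->
      exists (f : Mor Z' Y') (g : Mor Y' X'),
        [/\ dist f g (comp (shM j) i),
            comp f j = comp m v, comp n f = k,
            comp g m = l & comp i g = comp (shM u) n]
}.

(* Main.v *)
Require Import Defs.
From mathcomp Require Import all_boot all_algebra.
From Stdlib Require Import Classical.
Set Implicit Arguments. Unset Strict Implicit. Unset Printing Implicit Defensive.
Import GRing.Theory.
Local Open Scope ring_scope.
Local Notation comp := Defs.comp.
Local Notation compA := Defs.compA.

Section Pre.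
Variable P : preadditive.

Lemma comp0m (X Y Z : P) (f : Mor X Y) : comp (0 : Mor Y Z) f = 0.
Proof. by apply: (addrI (comp 0 f)); rewrite addr0 -compDl addr0. Qed.

Lemma compm0 (X Y Z : P) (g : Mor Y Z) : comp g (0 : Mor X Y) = 0.
Proof. by apply: (addrI (comp g 0)); rewrite addr0 -compDr addr0. Qed.

Lemma compNm (X Y Z : P) (g : Mor Y Z) (f : Mor X Y) : comp (- g) f = - comp g f.
Proof. by apply/eqP; rewrite -subr_eq0 opprK -compDl addNr comp0m. Qed.

Lemma compmN (X Y Z : P) (g : Mor Y Z) (f : Mor X Y) : comp g (- f) = - comp g f.
Proof. by apply/eqP; rewrite -subr_eq0 opprK -compDr addNr compm0. Qed.

Lemma compBl (X Y Z : P) (g1 g2 : Mor Y Z) (f : Mor X Y) :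
  comp (g1 - g2) f = comp g1 f - comp g2 f.
Proof. by rewrite compDl compNm. Qed.

Lemma compBr (X Y Z : P) (g : Mor Y Z) (f1 f2 : Mor X Y) :
  comp g (f1 - f2) = comp g f1 - comp g f2.
Proof. by rewrite compDr compmN. Qed.

Lemma to_zero (Z0 W : P) (f : Mor W Z0) : is_zero Z0 -> f = 0.
Proof. by move=> hz; rewrite -(comp1m f) hz comp0m. Qed.

Lemma from_zero (Z0 W : P) (f : Mor Z0 W) : is_zero Z0 -> f = 0.
Proof. by move=> hz; rewrite -(compm1 f) hz compm0. Qed.

End Pre.

Section Tri.
Variable T : triangulated.

Lemma shM0 (X Y : T) : shM (0 : Mor X Y) = 0.
Proof. by apply: (addrI (shM (0 : Mor X Y))); rewrite addr0 -shM_D addr0. Qed.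

Lemma shMN (X Y : T) (f : Mor X Y) : shM (- f) = - shM f.
Proof. by apply/eqP; rewrite -subr_eq0 opprK -shM_D addNr shM0. Qed.

Lemma shM_inj (X Y : T) (f g : Mor X Y) : shM f = shM g -> f = g.
Proof. have [k kK _] := shM_ff X Y; by move=> e; rewrite -(kK f) -(kK g) e. Qed.

Lemma shM_surj (X Y : T) (c : Mor (sh X) (sh Y)) : exists f : Mor X Y, shM f = c.
Proof.
have [g _ gK] := shM_ff X Y. by exists (g c); rewrite gK.
Qed.

Lemma zero_obj : exists Z0 : T, is_zero Z0.
Proof. by case: (tc_additive T). Qed.

Lemma dist_comp (X Y Z : T) (u : Mor X Y) (v : Mor Y Z) (w : Mor Z (sh X)) :
  dist u v w -> comp v u = 0.
Proof.
move=> d; have [Z0 hz] := zero_obj.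
have [c [h1 _]] := TR3 (a := idm X) (b := u) (TR1_id X hz) d erefl.
by rewrite -h1 compm0.
Qed.

Lemma exact_into (A B D W : T) (a : Mor A B) (b : Mor B D) (c : Mor D (sh A))
  (f : Mor W B) : dist a b c -> comp b f = 0 -> exists g : Mor W A, f = comp a g.
Proof.
move=> d hf; have [Z0 hz] := zero_obj.
have d0 := proj1 (TR2 _ _ _) (TR1_id W hz).
have d1 := proj1 (TR2 _ _ _) d.
have [c' [_ h2]] := TR3 (a := f) (b := (0 : Mor Z0 D)) d0 d1
   (etrans (compm0 _ _) (esym hf)).
have [g hg] := shM_surj c'.
exists g; apply: shM_inj; rewrite shM_comp hg.
move: h2; rewrite shM_1 compmN compm1 compNm => /eqP; rewrite eqr_opp => /eqP.
done.
Qed.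

Lemma exact_out (A B D W : T) (a : Mor A B) (b : Mor B D) (c : Mor D (sh A))
  (f : Mor B W) : dist a b c -> comp f a = 0 -> exists h : Mor D W, f = comp h b.
Proof.
move=> d hf; have [Z0 hz] := zero_obj.
have [W' [phi [psi [h1 h2]]]] := sh_es W.
have d0 := proj1 (TR2 _ _ _) (proj1 (TR2 _ _ _) (TR1_id W' hz)).
have dW : dist (0 : Mor Z0 W) (idm W) (0 : Mor W (sh Z0)).
  apply: (TR1_iso (a := idm Z0) (b := phi) (c := - phi) _ _ _ _ _ _ d0).
  - by exists (idm Z0); rewrite comp1m.
  - by exists psi.
  - by exists (- psi); rewrite !compNm !compmN !opprK h1 h2.
  - by rewrite compm0 comp0m.
  - by rewrite comp1m compNm compmN shM_1 compm1 opprK.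
  - by rewrite shM_1 comp1m shM0 oppr0 comp0m.
have [h [e1 _]] := TR3 (a := (0 : Mor A Z0)) (b := f) d dW
   (etrans hf (esym (compm0 _ _))).
by exists h; rewrite e1 comp1m.
Qed.

Lemma split_lemma (A Y K : T) (s : Mor A Y) (t : Mor Y K) (q : Mor K (sh A))
  (h : Mor Y A) : dist s t q -> comp h s = idm A ->
  exists i2 : Mor K Y, is_biproduct s i2 h t.
Proof.
move=> d hs.
have d1 := proj1 (TR2 _ _ _) d.
have hq : q = 0.
  have e := dist_comp (proj1 (TR2 _ _ _) d1).
  rewrite -(comp1m q) -shM_1 -hs shM_comp -compA.
  by move: e; rewrite compNm => /eqP; rewrite oppr_eq0 => /eqP ->; rewrite compm0.
have hq0 : comp q (idm K) = 0 by rewrite hq comp0m.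
have [sg hsg] := exact_into d1 hq0.
have hts := dist_comp d.
have ht0 : comp t (idm Y - comp sg t) = 0.
  by rewrite compBr compm1 compA -hsg comp1m subrr.
have [g hg] := exact_into d ht0.
exists (sg - comp s (comp h sg)); split.
- exact: hs.
- by rewrite compBr -hsg compA hts comp0m subr0.
- by rewrite compBr compA hs comp1m subrr.
- exact: hts.
- rewrite compBl.
  have E : comp sg t = idm Y - comp s g by rewrite -hg opprB addrC subrK.
  rewrite E -!compA E compBr compm1 (compA h s g) hs comp1m compBr.
  by rewrite opprB addrCA [comp s h + _]addrC !subrK.
Qed.

Lemma irr_nonzero (X Y : T) (u : Mor X Y) :
  indecomposable X -> indecomposable Y -> irreducible u -> u = 0 -> False.
Proof.
move=> [nX _] [nY _] [_ [_ hu]] u0; have [Z0 hz] := zero_obj.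
case: (hu Z0 0 0); first by rewrite compm0 u0.
- by move=> [g hg]; apply: nX; rewrite /is_zero -hg compm0.
- by move=> [g hg]; apply: nY; rewrite /is_zero -hg comp0m.
Qed.

Lemma half (X Y C A B : T) (u : Mor X Y) (v : Mor Y C) (w : Mor C (sh X))
  (p : Mor C A) (i' : Mor B C) (p' : Mor C B) :
  indecomposable X -> indecomposable Y -> irreducible u -> dist u v w ->
  comp p i' = 0 -> comp p' i' = idm B -> ~ is_zero B -> comp p v = 0.
Proof.
move=> iX iY iu d hpi hpi' nB.
have [E [beta [gamma dE]]] := TR1_ex (comp p v).
have d1 := proj1 (TR2 _ _ _) d.
have [c [hc1 hc2]] := TR3 (a := idm Y) (b := p) d1 dE (esym (compm1 _)).
rewrite shM_1 comp1m in hc2.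
have [Xk [phi [psi [h1 h2]]]] := sh_es E.
have [f hf] := shM_surj (comp psi c).
have [g hg] := shM_surj (- comp gamma phi).
have ugf : comp g f = u.
  apply: shM_inj; rewrite shM_comp hf hg compNm -compA (compA phi psi c) h2 comp1m.
  by rewrite -hc2 opprK.
have [_ [_ hu]] := iu.
case: (hu _ f g ugf).
- move=> [f' hf'].
  set r := comp (shM f') psi.
  have hrc : comp r c = idm (sh X) by rewrite /r -compA -hf -shM_comp hf' shM_1.
  have hw : w = comp r (comp beta p) by rewrite -hc1 compA hrc comp1m.
  have wi : comp w i' = 0 by rewrite hw -!compA hpi !compm0.
  have [g0 hg0] := exact_into d1 wi.
  have [K [t [q dK]]] := TR1_ex g0.
  have hh : comp (comp p' v) g0 = idm B by rewrite -compA -hg0 hpi'.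
  have [i2 bp] := split_lemma dK hh.
  have [_ hY] := iY.
  case: (hY _ _ _ _ _ _ bp) => // hK.
  exfalso; apply: (irr_nonzero iX iY iu).
  have [_ _ _ _ hsum] := bp.
  rewrite (from_zero i2 hK) comp0m addr0 in hsum.
  by rewrite -(comp1m u) -hsum -!compA (dist_comp d) !compm0.
- move=> [g' hg'].
  have hsec : comp gamma (- comp phi (shM g')) = idm (sh Y).
    by rewrite compmN compA -compNm -hg -shM_comp hg' shM_1.
  have e := dist_comp (proj1 (TR2 _ _ _) (proj1 (TR2 _ _ _) dE)).
  apply: shM_inj; rewrite shM0.
  apply/eqP; rewrite -oppr_eq0 -shMN; apply/eqP.
  by rewrite -(compm1 (shM _)) -hsec compA shMN e comp0m.
Qed.

End Tri.

Theorem proposition6 (T : triangulated) (X Y C : T)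
    (u : Mor X Y) (v : Mor Y C) (w : Mor C (sh X)) :
  indecomposable X -> indecomposable Y -> irreducible u ->
  dist u v w -> indecomposable C.
Proof.
move=> iX iY iu d.
have nosplit : v = 0 -> False.
  move=> v0; have [_ [ne _]] := iu.
  have hv : comp v (idm Y) = 0 by rewrite compm1 v0.
  have [g hg] := exact_into d hv.
  by apply: ne; exists g.
split.
- by move=> hC; apply: nosplit; rewrite -(comp1m v) hC comp0m.
- move=> A B i1 i2 p1 p2 bp.
  have [h11 h22 h12 h21 hsum] := bp.
  case: (classic (is_zero A)) => hA; first by left.
  case: (classic (is_zero B)) => hB; first by right.
  exfalso; apply: nosplit.
  have e1 := half iX iY iu d h12 h22 hB.
  have e2 := half iX iY iu d h21 h11 hA.
  by rewrite -(comp1m v) -hsum compDl -!compA e1 e2 !compm0 addr0.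
Qed.
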